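(* Let $x,y\in B$ with $|x|=|y|$, $\delta(x)=3$ and $\delta(y)=1$. Then $s([x]_2)<s([y]_2)$.
   Context: Stern's sequence $(a(n))_{n\ge0}$: $a(0)=0$, $a(1)=1$, $a(2n)=a(n)$, $a(2n+1)=a(n)+a(n+1)$; $s(n)=a(n+1)$. For a binary string $x$, $[x]_2$ is the integer it represents in base 2 and $|x|$ its length. $B$ denotes the set of nonempty binary strings that are concatenations of blocks each equal to $10$ or $100$; for $x\in B$, $\delta(x)$ is the number of $0$s minus the number of $1$s in $x$, which equals the number of $100$ blocks. *)

(* Defs.v *)
From mathcomp Require Import all_boot.
From mathcomp Require Import all_algebra.
Set Implicit Arguments. Unset Strict Implicit. Unset Printing Implicit Defensive.

Fixpoint stern_fuel (f n : nat) : nat :=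
  match f with
  | 0 => 0
  | f'.+1 =>
    if n <= 1 then n
    else if odd n then stern_fuel f' n./2 + stern_fuel f' n./2.+1
    else stern_fuel f' n./2
  end.

Definition stern_a (n : nat) : nat := stern_fuel n.+1 n.

Definition stern_s (n : nat) : nat := stern_a n.+1.

(* binary strings: seq bool, true = '1', most significant bit first *)
Definition bin_val (x : seq bool) : nat :=
  foldl (fun acc (b : bool) => acc.*2 + b) 0 x.

Inductive inB : seq bool -> Prop :=
  | inB_10 : inB [:: true; false]
  | inB_100 : inB [:: true; false; false]
  | inB_cat10 : forall x, inB x -> inB (x ++ [:: true; false])
  | inB_cat100 : forall x, inB x -> inB (x ++ [:: true; false; false]).

Definition delta (x : seq bool) : int :=
  (count (fun b => ~~ b) x)%:Z - (count id x)%:Z.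

Lemma stern_sanity : [seq stern_a n | n <- iota 0 12] = [:: 0;1;1;2;1;3;2;3;1;4;3;5].
Proof. by []. Qed.
Lemma bin_sanity : bin_val [:: true; false; false] = 4. Proof. by []. Qed.

(* Main.v *)
Require Import Defs.
From mathcomp Require Import all_boot all_algebra zify.
Import GRing.Theory.

Lemma fuel_step f n : stern_fuel f.+1 n =
  if n <= 1 then n
  else if odd n then stern_fuel f n./2 + stern_fuel f n./2.+1
  else stern_fuel f n./2.
Proof. by []. Qed.

Lemma fuel_eq f g n : n < f -> n < g -> stern_fuel f n = stern_fuel g n.
Proof.
elim: f g n => [|f IH] [|g] n //= Hf Hg.
rewrite -!/(stern_fuel _ _).
case: ifP => // H1.
have E := odd_double_half n.
case: ifP => Ho; rewrite Ho in E.
- rewrite (IH g n./2) ?(IH g n./2.+1) //; move: E; rewrite -!muln2; lia.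
- rewrite (IH g n./2) //; move: E; rewrite -!muln2; lia.
Qed.

Lemma a_fuel f n : n < f -> stern_fuel f n = stern_a n.
Proof. by move=> H; apply: fuel_eq. Qed.

Lemma a_even n : stern_a n.*2 = stern_a n.
Proof.
case: n => [|n] //; move: (n.+1) (ltn0Sn n) => m Hm.
rewrite /stern_a fuel_step odd_double doubleK.
case: ifP => H; first by move: H; rewrite -muln2; lia.
apply: a_fuel; rewrite -muln2; lia.
Qed.

Lemma a_odd n : stern_a n.*2.+1 = stern_a n + stern_a n.+1.
Proof.
case: n => [|n] //; move: (n.+1) (ltn0Sn n) => m Hm.
have Ho : odd m.*2.+1 by rewrite oddS odd_double.
have Hh : (m.*2.+1)./2 = m by rewrite /= uphalf_double.
rewrite /stern_a fuel_step Ho Hh.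
case: ifP => H; first by move: H; rewrite -muln2; lia.
rewrite !a_fuel //; rewrite -muln2; lia.
Qed.

Lemma bin_rcons x b : bin_val (rcons x b) = (bin_val x).*2 + b.
Proof. by rewrite /bin_val -cats1 foldl_cat. Qed.

Lemma step10 x : let n := bin_val x in
  stern_a (bin_val (x ++ [:: true; false])) = stern_a n + stern_a n.+1 /\
  stern_a (bin_val (x ++ [:: true; false])).+1 = stern_a n + 2 * stern_a n.+1.
Proof.
have -> : x ++ [:: true; false] = rcons (rcons x true) false by rewrite -!cats1 -catA.
rewrite !bin_rcons addn0 addn1.
rewrite a_even a_odd a_odd -doubleS a_even /=; split => //; rewrite a_odd; lia.
Qed.

Lemma step100 x : let n := bin_val x in
  stern_a (bin_val (x ++ [:: true; false; false])) = stern_a n + stern_a n.+1 /\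
  stern_a (bin_val (x ++ [:: true; false; false])).+1 = 2 * stern_a n + 3 * stern_a n.+1.
Proof.
have -> : x ++ [:: true; false; false] = rcons (x ++ [:: true; false]) false by rewrite -cats1 -catA.
rewrite bin_rcons addn0 a_even a_odd.
have [A B] := step10 x; rewrite /= A B; split => //; lia.
Qed.

From Stdlib Require Import Reals Lra Psatz.
Open Scope R_scope.

Lemma r_q (u v : R): 0<=u -> 0<=v -> u*v+u*u <= v*v -> u <= 6181/10000*v.
Proof. intros; nra. Qed.
Lemma r_step10 (p u v : R): p*p=p+1 -> (u+v) + p*(u+2*v) = (p+1)*(u+p*v).
Proof. intros H; replace ((p+1)*(u+p*v)) with (u + p*u + (p*p)*v + p*v) by ring; rewrite H; ring. Qed.
Lemma r_up100 (p u v : R): 1618/1000 <= p <= 16181/10000 -> 0<=u -> u <= 6181/10000*v ->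
  (u+v)+p*(2*u+3*v) <= 379/100*(u+p*v).
Proof. intros; nra. Qed.
Lemma r_lo100 (p u v : R): 1618/1000 <= p <= 16181/10000 -> 0<=u -> 0<=v ->
  36/10*(u+p*v) <= (u+v)+p*(2*u+3*v).
Proof. intros; nra. Qed.
Lemma r_final (p P ux vx uy vy : R): 1618/1000 <= p <= 16181/10000 -> 0 < P ->
  0 <= ux -> vx <= 3*ux -> ux + p*vx <= P*(379/100)^3 ->
  0 <= uy -> uy <= 6181/10000*vy -> P*(p+1)^3*(36/10) <= uy + p*vy -> vx < vy.
Proof.
intros Hp HP H1 H2 H3 H4 H5 H6.
assert (L3 : (2618/1000)^3 <= (p+1)^3).
{ apply pow_incr; lra. }
assert (A : (p + 1/3) * vx <= P*(379/100)^3) by lra.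
assert (B : P*(2618/1000)^3*(36/10) <= (p+6181/10000)*vy).
{ assert (P*(2618/1000)^3 <= P*(p+1)^3) by (apply Rmult_le_compat_l; lra). nra. }
destruct (Rlt_or_le vx vy) as [H|H]; auto.
exfalso.
assert (C: (p+1/3)*(p+6181/10000)*vy <= (p+1/3)*(p+6181/10000)*vx).
{ apply Rmult_le_compat_l; nra. }
assert (P*(2618/1000)^3*(36/10)*(p+1/3) <= (p+6181/10000)*P*(379/100)^3) by nra.
nra.
Qed.

Lemma INR2 : INR 2 = 2. Proof. simpl; lra. Qed.
Lemma INR3 : INR 3 = 3. Proof. simpl; lra. Qed.

Lemma inv (p:R) (Hp: p*p = p+1) (Hb: 1618/1000 <= p <= 16181/10000) (x : seq bool) : inB x ->
 exists k d : nat, (count (fun b => ~~ b) x = k + 2*d)%nat /\ (count (@id bool) x = k + d)%nat /\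
  (stern_a (bin_val x).+1 <= 3 * stern_a (bin_val x))%nat /\
  (stern_a (bin_val x) * stern_a (bin_val x).+1 + stern_a (bin_val x) * stern_a (bin_val x) <= stern_a (bin_val x).+1 * stern_a (bin_val x).+1)%nat /\
  INR (stern_a (bin_val x)) + p * INR (stern_a (bin_val x).+1) <= p * (p+1)^k * (379/100)^d /\
  p * (p+1)^k * (36/10)^d <= INR (stern_a (bin_val x)) + p * INR (stern_a (bin_val x).+1).
Proof.
elim.
- exists 1%nat, 0%nat. have -> : stern_a (bin_val [:: true; false]) = 1%nat by [].
  have -> : stern_a (bin_val [:: true; false]).+1 = 2%nat by [].
  rewrite INR2 /=; split => //; split => //; split => //; split => //; nra.
- exists 0%nat, 1%nat. have -> : stern_a (bin_val [:: true; false; false]) = 1%nat by [].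
  have -> : stern_a (bin_val [:: true; false; false]).+1 = 3%nat by [].
  rewrite INR3 /=; split => //; split => //; split => //; split => //; nra.
- move=> y _ [k [d [H0 [H1 [H2 [H3 [H4 H5]]]]]]].
  have [-> ->] := step10 y.
  move: H2 H3 H4 H5; rewrite /=.
  move: (stern_a (bin_val y)) (stern_a (bin_val y).+1) => u v H2 H3 H4 H5.
  exists k.+1, d.
  rewrite !count_cat /= H0 H1.
  have HU := pos_INR u. have HV := pos_INR v.
  split; first by lia. split; first by lia. split; first by lia. split; first by nia.
  rewrite !plus_INR. change (INR 0) with 0.
  have E := r_step10 p (INR u) (INR v) Hp.
  have B1 : (p+1)*(INR u + p * INR v) <= (p+1) * (p * (p + 1) ^ k * (379 / 100) ^ d) by apply Rmult_le_compat_l; lra.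
  have B2 : (p+1) * (p * (p + 1) ^ k * (36 / 10) ^ d) <= (p+1)*(INR u + p * INR v) by apply Rmult_le_compat_l; lra.
  split; lra.
- move=> y _ [k [d [H0 [H1 [H2 [H3 [H4 H5]]]]]]].
  have [-> ->] := step100 y.
  move: H2 H3 H4 H5; rewrite /=.
  move: (stern_a (bin_val y)) (stern_a (bin_val y).+1) => u v H2 H3 H4 H5.
  exists k, d.+1.
  rewrite !count_cat /= H0 H1.
  have HU := pos_INR u. have HV := pos_INR v.
  split; first by lia. split; first by lia. split; first by lia. split; first by nia.
  rewrite !plus_INR. change (INR 0) with 0.
  have Hq : INR u <= 6181/10000 * INR v.
  { apply r_q => //. rewrite -!mult_INR -plus_INR. apply le_INR. apply/leP. exact H3. }
  have U1 := r_up100 p (INR u) (INR v) Hb HU Hq.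
  have L1 := r_lo100 p (INR u) (INR v) Hb HU HV.
  have B1 : 379/100*(INR u + p * INR v) <= 379/100 * (p * (p + 1) ^ k * (379 / 100) ^ d) by apply Rmult_le_compat_l; lra.
  have B2 : 36/10 * (p * (p + 1) ^ k * (36 / 10) ^ d) <= 36/10*(INR u + p * INR v) by apply Rmult_le_compat_l; lra.
  split; nra.
Qed.

Lemma phi_ex : exists p : R, p*p = p+1 /\ 1618/1000 <= p <= 16181/10000.
Proof.
exists ((1 + sqrt 5)/2).
have H := sqrt_sqrt 5 ltac:(lra). have H0 := sqrt_pos 5.
split; [nra|split; nra].
Qed.

Close Scope R_scope.

Theorem mainTheorem12 (x y : seq bool) :
  inB x -> inB y -> size x = size y ->
  delta x = (Posz 3) -> delta y = (Posz 1) ->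
  stern_s (bin_val x) < stern_s (bin_val y).
Proof.
move=> Hx Hy Hs Dx Dy.
have [p [Hp Hb]] := phi_ex.
have [kx [dx [Cx0 [Cx1 [Ax [Qx [Ux _]]]]]]] := inv p Hp Hb x Hx.
have [ky [dy [Cy0 [Cy1 [Ay [Qy [_ Ly]]]]]]] := inv p Hp Hb y Hy.
have Sz : forall z : seq bool, size z = count (@id bool) z + count (fun b => ~~ b) z.
  by move=> z; rewrite -(count_predC (@id bool) z).
rewrite /delta Cx0 Cx1 in Dx. rewrite /delta Cy0 Cy1 in Dy.
rewrite !Sz Cx0 Cx1 Cy0 Cy1 in Hs.
have edx : dx = 3 by lia.
have edy : dy = 1 by lia.
have eky : ky = (kx + 3)%coq_nat by lia.
subst dx dy ky.
rewrite /stern_s.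
move: Ax Qx Ux Ay Qy Ly.
move: (stern_a (bin_val x)) (stern_a (bin_val x).+1) (stern_a (bin_val y)) (stern_a (bin_val y).+1) => ux vx uy vy Ax Qx Ux Ay Qy Ly.
apply/ltP; apply INR_lt.
have HUx := pos_INR ux. have HUy := pos_INR uy. have HVy := pos_INR vy.
have Hq : (INR uy <= 6181/10000 * INR vy)%R.
{ apply r_q => //. rewrite -!mult_INR -plus_INR. apply le_INR. apply/leP. exact Qy. }
have A3 : (INR vx <= 3 * INR ux)%R.
{ rewrite -INR3 -mult_INR. apply le_INR. apply/leP. exact Ax. }
apply (r_final p (p * (p+1)^kx) (INR ux) (INR vx) (INR uy) (INR vy)) => //.
- apply Rmult_lt_0_compat; [lra| apply pow_lt; lra].
- rewrite pow_add in Ly. rewrite pow_1 in Ly. 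
  replace (p * (p + 1) ^ kx * (p + 1) ^ 3 * (36 / 10))%R with (p * ((p + 1) ^ kx * (p + 1) ^ 3) * (36 / 10))%R by ring.
  exact Ly.
Qed.
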